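(* Consider the scheduling model described in the context with parameters $(p_k,q_k,d,K)$. Suppose a fixed source $k$ is scheduled in every time slot, starting from $t=-\infty$. Then the expected reward received by the monitoring station in any time slot equals $\mu_k := \frac{p_kq_k}{1-d(1-p_k)}$. Consequently the optimal source, i.e. the source whose permanent scheduling (from $t=-\infty$) maximizes the expected reward received by the monitoring station, and which the oracle policy schedules in every time slot, is $$k^* = \arg\max_{1\le k\le K}\frac{p_kq_k}{1-d(1-p_k)}.$$
   Context: Model: there are $K$ sources, one communication channel and one monitoring station; time is slotted. In each slot exactly one source is scheduled to transmit its update. If source $k$ is scheduled, the transmission succeeds with probability $p_k$ (independently across slots and of everything else), and the update is a correct measurement ($Q=1$) with probability $q_k$, otherwise $Q=0$ (independently across slots and of everything else). The age of information $a(t)$ at slot $t$ satisfies $a(t)=1$ if the transmission in slot $t-1$ succeeded and $a(t)=a(t-1)+1$ otherwise. With a known depreciation factor $d\in(0,1)$, the reward in slot $t$ is $r(t)=Q(t-a(t))\,d^{a(t)-1}$, where $Q(s)\in\{0,1\}$ is the correctness indicator of the update successfully delivered in slot $s$; equivalently $r(t)=Q(t-1)$ if the transmission in slot $t-1$ succeeds and $r(t)=d\,r(t-1)$ otherwise. *)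

(* Defs.v *)
From HB Require Import structures.
From mathcomp Require Import all_boot all_order all_algebra.
From mathcomp Require Import all_classical all_reals all_analysis.
Set Implicit Arguments. Unset Strict Implicit. Unset Printing Implicit Defensive.
Import Order.TTheory GRing.Theory Num.Theory.
Local Open Scope classical_set_scope.
Local Open Scope ring_scope.

Section Defs.
Context {R : realType} {dT : measure_display} {T : measurableType dT}.

Definition mutually_independent {I : eqType} (P : probability T R)
    (X : I -> T -> bool) : Prop :=
  forall (J : seq I) (b : I -> bool), uniq J ->
    P (\big[setI/setT]_(i <- J) [set w | X i w = b i]) =
    (\prod_(i <- J) P [set w | X i w = b i])%E.

(* The channel/measurement model when one fixed source, with success
   probability p and correctness probability q, is scheduled in every slot
   t : int (i.e. from t = -oo):
   S t w = transmission in slot t succeeded, Q t w = the update of slot t is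
   correct; all these indicators are mutually independent. *)
Definition fixed_source_model (P : probability T R) (p q : R)
    (S Q : int -> T -> bool) : Prop :=
  [/\ forall t, measurable [set w | S t w],
      forall t, measurable [set w | Q t w],
      forall t, P [set w | S t w] = p%:E,
      forall t, P [set w | Q t w] = q%:E &
      mutually_independent P
        (fun i : int + int => match i with inl t => S t | inr t => Q t end)].

(* Reward at slot t: with a(t) = age = number of slots since the last
   successful transmission (a(t) = j+1 where j is minimal with S (t-j-1)),
   r(t) = Q(t - a(t)) * d^(a(t)-1).  On the (null) event that no transmission
   ever succeeded before t the reward is set to 0. *)
Definition reward (d : R) (S Q : int -> T -> bool) (t : int) (w : T) : R :=
  match pselect (exists j : nat, S (t - j.+1%:Z) w) with
  | left h => let j := ex_minn h in (Q (t - j.+1%:Z) w)%:R * d ^+ j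
  | right _ => 0
  end.

End Defs.

Definition mu {R : realType} (d p q : R) : R := p * q / (1 - d * (1 - p)).

(* Main.v *)
Require Import Defs.
From HB Require Import structures.
From mathcomp Require Import all_boot all_order all_algebra.
From mathcomp Require Import all_classical all_reals all_analysis.
From mathcomp Require Import measurable_realfun ring lra.
Import Order.TTheory GRing.Theory Num.Theory.
Local Open Scope classical_set_scope.
Local Open Scope ring_scope.
Section Aux.
Context {R : realType} {dT : measure_display} {T : measurableType dT}.

Lemma bigI_mem {I : eqType} (J : seq I) (F : I -> set T) w :
  (\big[setI/setT]_(i <- J) F i) w <-> (forall i, i \in J -> F i w).
Proof.
elim: J => [|a J IH]; first by rewrite big_nil; split.
rewrite big_cons; split.
  move=> [Fa /IH H] i; rewrite in_cons => /orP[/eqP ->//|]; exact: H.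
move=> H; split; first by apply: H; rewrite mem_head.
by apply/IH => i iJ; apply: H; rewrite in_cons iJ orbT.
Qed.

Lemma bigI_meas {I : eqType} (J : seq I) (F : I -> set T) :
  (forall i, measurable (F i)) -> measurable (\big[setI/setT]_(i <- J) F i).
Proof.
move=> mF; elim: J => [|a J IH]; first by rewrite big_nil.
by rewrite big_cons; apply: measurableI.
Qed.

Lemma int_sub_eq (t : int) (i n : nat) :
  (t - i.+1%:Z == t - n.+1%:Z) = (i == n).
Proof.
apply/eqP/eqP => [h|->//].
have : (i.+1%:Z = n.+1%:Z) by apply/oppr_inj/(addrI t).
by case.
Qed.

End Aux.
Section Model.
Context {R : realType} {dT : measure_display} {T : measurableType dT}.
Variables (P : probability T R) (p q : R) (S Q : int -> T -> bool) (t : int).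

Definition Xf (i : int + int) : T -> bool :=
  match i with inl s => S s | inr s => Q s end.
Definition Jn (n : nat) : seq (int + int) :=
  [seq inl (t - i.+1%:Z) | i <- iota 0 n] ++ [:: inl (t - n.+1%:Z); inr (t - n.+1%:Z)].
Definition bn (n : nat) (i : int + int) : bool :=
  match i with inl s => s == t - n.+1%:Z | inr _ => true end.
Definition An (n : nat) : set T :=
  \big[setI/setT]_(i <- Jn n) [set w | Xf i w = bn n i].

Lemma An_mem n w : An n w <->
  [/\ forall i, (i < n)%N -> S (t - i.+1%:Z) w = false, S (t - n.+1%:Z) w & Q (t - n.+1%:Z) w].
Proof.
rewrite /An bigI_mem; split.
  move=> H; split.
  - move=> i lin; have := H (inl (t - i.+1%:Z)); rewrite /= int_sub_eq.
    rewrite (ltn_eqF lin); apply; rewrite mem_cat; apply/orP; left.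
    by apply/mapP; exists i => //; rewrite mem_iota.
  - by have := H (inl (t - n.+1%:Z)); rewrite /= eqxx; apply;
      rewrite mem_cat !in_cons eqxx /= orbT.
  - by have := H (inr (t - n.+1%:Z)); rewrite /=; apply;
      rewrite mem_cat !in_cons eqxx /= !orbT.
move=> [H1 H2 H3] i; rewrite mem_cat => /orP[/mapP[j]|].
  by rewrite mem_iota => /andP[_ jn] ->; rewrite /= int_sub_eq (ltn_eqF jn) H1.
by rewrite !in_cons => /orP[/eqP->|/orP[/eqP->|//]] /=; rewrite ?eqxx.
Qed.

Lemma Jn_uniq n : uniq (Jn n).
Proof.
rewrite cat_uniq; apply/and3P; split.
- rewrite map_inj_in_uniq ?iota_uniq // => i j _ _ [] /eqP.
  by rewrite int_sub_eq => /eqP.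
- apply/hasPn => x; rewrite !in_cons => /orP[/eqP->|/orP[/eqP->|//]].
  + apply/mapP => -[j]; rewrite mem_iota => /andP[_ jn] [] /eqP.
    by rewrite eq_sym int_sub_eq (ltn_eqF jn).
  + by apply/mapP => -[j].
- by [].
Qed.

Hypothesis model : fixed_source_model P p q S Q.

Lemma Xf_meas i b : measurable [set w | Xf i w = b].
Proof.
case: model => mS mQ _ _ _.
have mX : measurable [set w | Xf i w] by case: i.
case: b => //.
have -> : [set w | Xf i w = false] = ~` [set w | Xf i w].
  by apply/seteqP; split => w /=; case: (Xf i w).
exact: measurableC.
Qed.

Lemma An_meas n : measurable (An n).
Proof. apply: bigI_meas => i; exact: Xf_meas. Qed.

Lemma An_prob n : P (An n) = ((1 - p) ^+ n * p * q)%:E.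
Proof.
case: model => mS mQ PS PQ ind.
rewrite /An ind ?Jn_uniq // /Jn big_cat big_map /= !big_cons big_nil /= eqxx.
have PSf s : P [set w | S s w = false] = (1 - p)%:E.
  have -> : [set w | S s w = false] = ~` [set w | S s w].
    by apply/seteqP; split => w /=; case: (S s w).
  by rewrite probability_setC // PS EFinB.
rewrite (eq_big_seq (fun _ => (1 - p)%:E)); last first.
  move=> j; rewrite mem_iota => /andP[_ jn]; rewrite int_sub_eq (ltn_eqF jn).
  exact: PSf.
rewrite PS PQ mule1.
have -> : (\prod_(j <- iota 0 n) (1 - p)%:E)%E = ((1 - p) ^+ n)%:E.
  elim: n {ind} => [|n IH]; first by rewrite big_nil.
  by rewrite -addn1 iotaD big_cat /= big_seq1 IH addn1 exprSr EFinM.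
by rewrite -!EFinM mulrA.
Qed.

End Model.
Section Series.
Context {R : realType} {dT : measure_display} {T : measurableType dT}.
Variables (d : R) (S Q : int -> T -> bool) (t : int).
Hypothesis d0 : 0 <= d.

Lemma reward_series w :
  (reward d S Q t w)%:E =
  (\sum_(n <oo) ((d ^+ n)%:E * (\1_(An S Q t n) w)%:E))%E.
Proof.
have f0 : forall k, (0 <= k)%N -> (0 <= (d ^+ k)%:E * (\1_(An S Q t k) w)%:E)%E.
  by move=> k _; rewrite -EFinM lee_fin mulr_ge0 ?exprn_ge0.
rewrite /reward; case: pselect => [h|nh].
  case: ex_minnP => j Sj jmin.
  rewrite (nneseries_split _ j.+1 f0) add0n eseries0 ?adde0; last first.
    move=> k jk _; rewrite indicE memNset ?mule0 // => /An_mem [H _ _].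
    by rewrite H in Sj.
  rewrite big_nat_recr //= big1_seq ?add0e; last first.
    move=> k /andP[_]; rewrite mem_index_iota => /andP[_ kj].
    rewrite indicE memNset ?mule0 // => /An_mem [_ Sk _].
    by have := jmin _ Sk; rewrite leqNgt kj.
  rewrite indicE; case Qj : (Q (t - j.+1%:Z) w).
    rewrite mem_set ?mul1r ?mule1 //; apply/An_mem; split => //.
    move=> i ij; apply/negbTE/negP => Si.
    by have := jmin _ Si; rewrite leqNgt ij.
  rewrite memNset ?mul0r ?mule0 // => /An_mem [_ _].
  by rewrite Qj.
rewrite eseries0 // => k _ _.
rewrite indicE memNset ?mule0 // => /An_mem [_ Sk _].
by apply: nh; exists k.
Qed.

End Series.
Lemma expected_reward {R : realType} {dT : measure_display} {T : measurableType dT}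
  (P : probability T R) (p q d : R) (S Q : int -> T -> bool) (t : int) :
  0 <= p <= 1 -> 0 <= q <= 1 -> 0 < d < 1 ->
  fixed_source_model P p q S Q ->
  (\int[P]_w (reward d S Q t w)%:E = (mu d p q)%:E)%E.
Proof.
move=> /andP[p0 p1] /andP[q0 q1] /andP[d0 d1] model.
under eq_integral do rewrite (reward_series d S Q t (ltW d0)).
rewrite integral_nneseries //; last 2 first.
- move=> n; apply: measurable_funeM; apply/measurable_realfun.measurable_EFinP.
  exact: (measurable_realfun.measurable_indic (An_meas P p q S Q t model n)).
- move=> n x _; rewrite -EFinM lee_fin; apply: mulr_ge0; first exact: exprn_ge0 (ltW d0).
  exact: ler0n.
rewrite (@eq_eseriesr _ _ (fun n => (geometric (p * q) (d * (1 - p)) n)%:E)); last first.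
  move=> n _.
  have mI : measurable_fun setT (EFin \o (\1_(An S Q t n) : T -> R)).
    apply/measurable_realfun.measurable_EFinP.
    exact: (measurable_realfun.measurable_indic (An_meas P p q S Q t model n)).
  have I0 : forall x, setT x -> (0 <= (\1_(An S Q t n) x)%:E :> \bar R)%E.
    by move=> x _; rewrite lee_fin; exact: ler0n.
  rewrite (ge0_integralZl_EFin P measurableT I0 mI); last exact: exprn_ge0 (ltW d0).
  rewrite integral_indic; last exact: (An_meas P p q S Q t model n).
  have h : P (An S Q t n `&` setT) = ((1 - p) ^+ n * p * q)%:E.
    by rewrite setIT; exact: (An_prob P p q S Q t model n).
  apply: (@eq_trans _ _ ((d ^+ n)%:E * ((1 - p) ^+ n * p * q)%:E)%E).
    by congr (_ * _)%E; exact: h.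
  rewrite -EFinM /=.
  by congr (_%:E); rewrite exprMn; ring.
  exact: measurableT.
have hz : `|d * (1 - p)| < 1.
  have hz0 : 0 <= d * (1 - p) by nra.
  by rewrite ger0_norm //; nra.
transitivity (limn (EFin \o series (geometric (p * q) (d * (1 - p))))).
  by congr (limn _); apply/funext => n /=; rewrite sumEFin seriesEnat.
rewrite EFin_lim; last exact: is_cvg_geometric_series.
congr (_%:E); apply: cvg_lim => //; exact: cvg_geometric_series.
Qed.

Theorem theorem1 (R : realType) (K : nat) (p q : 'I_K -> R) (d : R)
  (hp : forall k, 0 <= p k <= 1) (hq : forall k, 0 <= q k <= 1)
  (hd : 0 < d < 1) :
  (* expected reward in any slot under permanent scheduling of source k *)
  (forall (k : 'I_K) (dT : measure_display) (T : measurableType dT)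
          (P : probability T R) (S Q : int -> T -> bool),
      fixed_source_model P (p k) (q k) S Q ->
      forall t : int,
        (\int[P]_w (reward d S Q t w)%:E = (mu d (p k) (q k))%:E)%E)
  /\
  (* hence an argmax of mu is an optimal source *)
  (forall kstar : 'I_K, (forall k, mu d (p k) (q k) <= mu d (p kstar) (q kstar)) ->
    forall (k : 'I_K)
      (dT : measure_display) (T : measurableType dT) (P : probability T R)
      (S Q : int -> T -> bool)
      (dT' : measure_display) (T' : measurableType dT') (P' : probability T' R)
      (S' Q' : int -> T' -> bool),
      fixed_source_model P (p k) (q k) S Q ->
      fixed_source_model P' (p kstar) (q kstar) S' Q' ->
      forall t : int,
        (\int[P]_w (reward d S Q t w)%:E <= \int[P']_w (reward d S' Q' t w)%:E)%E).
Proof.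
split.
  move=> k dT T P S Q m t; exact: (expected_reward _ _ _ _ _ _ t (hp k) (hq k) hd m).
move=> ks hks k dT T P S Q dT' T' P' S' Q' m m' t.
rewrite (expected_reward _ _ _ _ _ _ t (hp k) (hq k) hd m).
rewrite (expected_reward _ _ _ _ _ _ t (hp ks) (hq ks) hd m') lee_fin.
exact: hks.
Qed.
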